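(* For any subgroup $\mathcal M\le\mathcal P_n$, $\mathrm{rank}\,A^{(\mathcal M)}=\mathrm{rank}\,D^{(\mathcal M)}=|\mathcal C^{*(\mathcal M)}|$.
   Context: $\mathcal P_n$ is the $n$-qubit Pauli group without phases; $\langle A,B\rangle=0$ if $A,B$ commute and $1$ otherwise. $\Gamma$ is a finite collection of supports $\gamma\subseteq\{1,\dots,n\}$; $\mathcal E_\gamma$ is the set of non-identity Paulis supported in $\gamma$, and $\mathcal E_\Gamma$ the disjoint union of the $\mathcal E_\gamma$ (each $e$ labeled by its support $\gamma_e$). For $h\in\mathcal P_n$, $h_\gamma$ is its restriction to $\gamma$ (identity elsewhere). $A^{(\mathcal M)}$ is the $|\mathcal M|\times|\mathcal E_\Gamma|$ matrix with $A^{(\mathcal M)}[M,e]=1$ if $M_{\gamma_e}=e$ and $0$ otherwise; $D^{(\mathcal M)}$ is the $|\mathcal M|\times|\mathcal E_\Gamma|$ matrix with entries $\langle M,e\rangle$. $\mathcal C^{*(\mathcal M)}$ is the set of nontrivial syndrome classes, i.e. equivalence classes of $\mathcal E_\Gamma$ under equality of $(\langle e,M\rangle)_{M\in\mathcal M}$, excluding the class of all-zero syndrome. *)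

(* Defs.v *)
From mathcomp Require Import all_boot all_order all_algebra.
Set Implicit Arguments. Unset Strict Implicit. Unset Printing Implicit Defensive.
Import GRing.Theory Num.Theory.
Local Open Scope ring_scope.

(* Single-qubit Pauli without phase, encoded as (x-bit, z-bit):
   I = (false,false), X = (true,false), Z = (false,true), Y = (true,true). *)
Definition Pauli (n : nat) := {ffun 'I_n -> bool * bool}.

Definition pauli_id (n : nat) : Pauli n := [ffun _ => (false, false)].

Definition pauli_mul (n : nat) (p q : Pauli n) : Pauli n :=
  [ffun i => (((p i).1 (+) (q i).1), ((p i).2 (+) (q i).2))].

(* <A,B> : false (=0) if A and B commute, true (=1) otherwise
   (symplectic form). *)
Definition pauli_comm (n : nat) (p q : Pauli n) : bool :=
  \big[addb/false]_(i < n) (((p i).1 && (q i).2) (+) ((p i).2 && (q i).1)).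

Definition is_pauli_subgroup (n : nat) (M : {set Pauli n}) : Prop :=
  pauli_id n \in M /\
  (forall p q, p \in M -> q \in M -> pauli_mul p q \in M).

Definition restr (n : nat) (g : {set 'I_n}) (h : Pauli n) : Pauli n :=
  [ffun i => if i \in g then h i else (false, false)].

Definition supp (n : nat) (h : Pauli n) : {set 'I_n} :=
  [set i | h i != (false, false)].

(* E_Gamma: the disjoint union of the E_gamma, gamma in Gamma; an element
   is a pair (gamma_e, e). *)
Definition errE_pred (n : nat) (Gamma : {set {set 'I_n}})
  (x : {set 'I_n} * Pauli n) : bool :=
  [&& x.1 \in Gamma, x.2 != pauli_id n & supp x.2 \subset x.1].

Definition ErrE (n : nat) (Gamma : {set {set 'I_n}}) :=
  {x : {set 'I_n} * Pauli n | errE_pred Gamma x}.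

Definition gam (n : nat) (Gamma : {set {set 'I_n}}) (e : ErrE Gamma)
  : {set 'I_n} := (val e).1.
Definition pau (n : nat) (Gamma : {set {set 'I_n}}) (e : ErrE Gamma)
  : Pauli n := (val e).2.

Definition Amat (R : nzRingType) (n : nat) (Gamma : {set {set 'I_n}})
  (M : {set Pauli n}) : 'M[R]_(#|M|, #|{: ErrE Gamma}|) :=
  \matrix_(i < #|M|, j < #|{: ErrE Gamma}|)
    (if restr (gam (enum_val j)) (enum_val i) == pau (enum_val j)
     then 1 else 0).

Definition Dmat (R : nzRingType) (n : nat) (Gamma : {set {set 'I_n}})
  (M : {set Pauli n}) : 'M[R]_(#|M|, #|{: ErrE Gamma}|) :=
  \matrix_(i < #|M|, j < #|{: ErrE Gamma}|)
    (if pauli_comm (enum_val i) (pau (enum_val j)) then 1 else 0).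

Definition syndrome (n : nat) (Gamma : {set {set 'I_n}}) (M : {set Pauli n})
  (e : ErrE Gamma) : {ffun Pauli n -> bool} :=
  [ffun m => (m \in M) && pauli_comm (pau e) m].

(* C^*(M): the nontrivial syndrome classes (equivalence classes of E_Gamma
   under equality of syndromes, excluding the all-zero syndrome class). *)
Definition nontriv_classes (n : nat) (Gamma : {set {set 'I_n}})
  (M : {set Pauli n}) : {set {set ErrE Gamma}} :=
  [set [set f : ErrE Gamma | syndrome M f == syndrome M e]
     | e in [set e : ErrE Gamma | syndrome M e != [ffun _ => false]]].

(* Main.v *)
Require Import Defs.
From mathcomp Require Import all_boot all_order all_algebra.
From mathcomp Require Import ring lra.
Set Implicit Arguments. Unset Strict Implicit. Unset Printing Implicit Defensive.
Import GRing.Theory Num.Theory.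
Local Open Scope ring_scope.

Section Pauli.
Variable n : nat.
Implicit Types p q a b m x : Pauli n.

Lemma comm_sym p q : pauli_comm p q = pauli_comm q p.
Proof.
rewrite /pauli_comm; apply: eq_bigr => i _.
by case: (p i) (q i) => [[] []] [[] []].
Qed.

Lemma comm_mulr p a b :
  pauli_comm p (pauli_mul a b) = pauli_comm p a (+) pauli_comm p b.
Proof.
rewrite /pauli_comm -big_split /=; apply: eq_bigr => i _; rewrite ffunE /=.
by case: (p i) (a i) (b i) => [[] []] [[] []] [[] []].
Qed.

Lemma comm_mull p a b :
  pauli_comm (pauli_mul a b) p = pauli_comm a p (+) pauli_comm b p.
Proof. by rewrite !(comm_sym _ p) comm_mulr. Qed.

Lemma comm_idr p : pauli_comm p (pauli_id n) = false.
Proof.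
rewrite /pauli_comm big1 // => i _; rewrite ffunE /=.
by case: (p i) => [[] []].
Qed.

Lemma comm_idl p : pauli_comm (pauli_id n) p = false.
Proof. by rewrite comm_sym comm_idr. Qed.

Lemma mulK a b : pauli_mul a (pauli_mul a b) = b.
Proof.
apply/ffunP => i; rewrite !ffunE /=.
by case: (a i) (b i) => [[] []] [[] []].
Qed.

Lemma mul_eq_id a b : (pauli_mul a b == pauli_id n) = (a == b).
Proof.
apply/eqP/eqP => [H|->].
  apply/ffunP => i; move/ffunP: H => /(_ i); rewrite !ffunE /=.
  by case: (a i) (b i) => [[] []] [[] []].
apply/ffunP => i; rewrite !ffunE /=.
by case: (b i) => [[] []].
Qed.

Lemma supp_id : supp (pauli_id n) = set0.
Proof. by apply/setP => i; rewrite !inE ffunE eqxx. Qed.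

Lemma nsupp x i : i \notin supp x -> x i = (false, false).
Proof. by rewrite inE negbK => /eqP. Qed.

Lemma comm_restr (g : {set 'I_n}) q m :
  supp q \subset g -> pauli_comm q (restr g m) = pauli_comm q m.
Proof.
move=> sq; rewrite /pauli_comm; apply: eq_bigr => i _; rewrite ffunE.
case: ifP => // ig.
have : i \notin supp q by apply: contraFN ig => /(subsetP sq).
by move/nsupp ->; case: (m i) => [[] []].
Qed.

Lemma restr_supp (g : {set 'I_n}) m : supp (restr g m) \subset g.
Proof.
apply/subsetP => i; rewrite inE ffunE.
by case: ifP => //; rewrite eqxx.
Qed.

Lemma mul_supp (g : {set 'I_n}) a b :
  supp a \subset g -> supp b \subset g -> supp (pauli_mul a b) \subset g.
Proof.
move=> sa sb; apply/subsetP => i; rewrite inE ffunE /=.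
case: (boolP (i \in g)) => // ig.
have ha : i \notin supp a by apply: contra ig => /(subsetP sa).
have hb : i \notin supp b by apply: contra ig => /(subsetP sb).
by rewrite (nsupp ha) (nsupp hb).
Qed.

Lemma witness x : x != pauli_id n ->
  exists q, supp q \subset supp x /\ pauli_comm q x.
Proof.
move=> nx.
have [i xi] : exists i, x i != (false, false).
  apply/existsP; apply: contraR nx => /existsPn H.
  by apply/eqP/ffunP => i; rewrite ffunE; move/negPn/eqP: (H i).
pose q : Pauli n := [ffun j => if j == i then
   (if (x i).2 then (true, false) else (false, true)) else (false, false)].
exists q; split.
  apply/subsetP => j; rewrite inE ffunE; case: (j =P i) => [-> _|_]; last by rewrite eqxx.
  by rewrite inE.
rewrite /pauli_comm (bigD1 i) //= big1 => [|j ji]; last first.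
  by rewrite ffunE (negbTE ji).
rewrite ffunE eqxx addbF.
by move: xi; case: (x i) => [[] []].
Qed.

Definition sgb (R : nzRingType) (b : bool) : R := if b then -1 else 1.
Definition indb (R : nzRingType) (b : bool) : R := if b then 1 else 0.

Lemma sum_sg (R : realFieldType) (G : {set Pauli n}) (phi : Pauli n -> bool) :
  pauli_id n \in G ->
  (forall a b, a \in G -> b \in G -> pauli_mul a b \in G) ->
  (forall a b, a \in G -> b \in G -> phi (pauli_mul a b) = phi a (+) phi b) ->
  \sum_(g in G) sgb R (phi g) = if [exists g in G, phi g] then 0 else #|G|%:R.
Proof.
move=> G1 GM Gphi; case: ifP => [/existsP [g0 /andP [g0G pg0]]|/negbT/existsPn H].
  set S := \sum_(g in G) _.
  have : S = - S.
    rewrite {1}/S (reindex_inj (can_inj (@mulK g0))) /=.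
    rewrite /S -sumrN; apply: eq_big => g.
      apply/idP/idP => [h|gG]; last exact: GM.
      by rewrite -(mulK g0 g); apply: GM.
    move=> gG0; have gG : g \in G by rewrite -(mulK g0 g); apply: GM.
    rewrite (Gphi g0 g g0G gG) pg0 /sgb.
    by case: (phi g) => /=; rewrite ?opprK.
  move=> HS. lra.
rewrite -sumr_const; apply: eq_bigr => g gG.
by move: (H g); rewrite gG /= => /negbTE ->.
Qed.

End Pauli.
Section Main.
Variables (R : realFieldType) (n : nat) (Gamma : {set {set 'I_n}})
  (M : {set Pauli n}).
Hypothesis HM : is_pauli_subgroup M.

Definition Fv (q : Pauli n) : 'rV[R]_#|M| :=
  \row_i indb R (pauli_comm q (enum_val i)).

Definition S0 := [set e : ErrE Gamma | syndrome M e != [ffun _ => false]].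
Definition Syn := [set syndrome M e | e in S0].

Definition BD : 'M[R]_(#|Syn|, #|M|) :=
  \matrix_(j, i) indb R ((enum_val j : {ffun Pauli n -> bool}) (enum_val i)).

Lemma errP (e : ErrE Gamma) :
  [/\ gam e \in Gamma, pau e != pauli_id n & supp (pau e) \subset gam e].
Proof. by apply/and3P; exact: (valP e). Qed.

Lemma rowBD j : exists e : ErrE Gamma,
  [/\ syndrome M e = enum_val j, e \in S0 & row j BD = Fv (pau e)].
Proof.
have /imsetP [e eS0 ej] := enum_valP j.
exists e; split => //.
apply/rowP => i; rewrite !mxE ej ffunE.
by rewrite (enum_valP i).
Qed.

Lemma F_sub (e : ErrE Gamma) : (Fv (pau e) <= BD)%MS.
Proof.
case: (boolP (e \in S0)) => eS0.
  have Hin : syndrome M e \in Syn by apply: imset_f.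
  have -> : Fv (pau e) = row (enum_rank_in Hin (syndrome M e)) BD.
    by apply/rowP => i; rewrite !mxE (enum_rankK_in Hin Hin) ffunE (enum_valP i).
  exact: row_sub.
have -> : Fv (pau e) = 0.
  apply/rowP => i; rewrite !mxE.
  move: eS0; rewrite inE negbK => /eqP/ffunP/(_ (enum_val i)).
  by rewrite !ffunE (enum_valP i) /= => ->.
exact: sub0mx.
Qed.

Lemma Fq_sub (g : {set 'I_n}) q : g \in Gamma -> supp q \subset g ->
  (Fv q <= BD)%MS.
Proof.
move=> gG sq; case: (q =P pauli_id n) => [->|/eqP nq].
  have -> : Fv (pauli_id n) = 0 by apply/rowP => i; rewrite !mxE comm_idl.
  exact: sub0mx.
have P : errE_pred Gamma (g, q) by apply/and3P.
exact: (F_sub (exist _ (g, q) P)).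
Qed.


Lemma sumI (F : Pauli n -> R) :
  \sum_(i < #|M|) F (enum_val i) = \sum_(m in M) F m.
Proof. by rewrite (big_enum_val (A:=mem M)). Qed.

Lemma syn_hom s : s \in Syn -> forall a b, a \in M -> b \in M ->
  s (pauli_mul a b) = s a (+) s b.
Proof.
case/imsetP => e _ -> a b aM bM.
by rewrite !ffunE (proj2 HM a b aM bM) aM bM /= comm_mulr.
Qed.

Lemma syn_off s m : s \in Syn -> m \notin M -> s m = false.
Proof. by case/imsetP => e _ -> mM; rewrite ffunE (negbTE mM). Qed.

Lemma syn_nz s : s \in Syn -> [exists m in M, s m].
Proof.
move=> sS; have := sS; case/imsetP => e; rewrite inE => nz se.
apply: contraTT nz => /existsPn H; rewrite negbK -se; apply/eqP/ffunP => m.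
rewrite ffunE; case: (boolP (m \in M)) => mM.
  by move: (H m); rewrite mM /= => /negbTE.
exact: (syn_off sS mM).
Qed.

Lemma sumM_sg s : s \in Syn -> \sum_(m in M) sgb R (s m) = 0.
Proof.
move=> sS; rewrite (sum_sg _ (proj1 HM) (proj2 HM)) ?syn_nz //.
exact: syn_hom.
Qed.

Lemma sumM_sg2 s t : s \in Syn -> t \in Syn ->
  \sum_(m in M) sgb R (s m (+) t m) = if s == t then #|M|%:R else 0.
Proof.
move=> sS tS; rewrite (sum_sg _ (proj1 HM) (proj2 HM)); last first.
  move=> a b aM bM; rewrite (syn_hom sS) // (syn_hom tS) //.
  by case: (s a) (s b) (t a) (t b) => [] [] [] [].
have -> : [exists g in M, s g (+) t g] = (s != t).
  apply/existsP/idP => [[m /andP [_ h]]|].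
    by apply: contraTN h => /eqP ->; rewrite addbb.
  move=> nst; have [m hm] : exists m, s m != t m.
    apply/existsP; apply: contraR nst => /existsPn H.
    by apply/eqP/ffunP => m; apply/eqP; rewrite -[_ == _]negbK H.
  exists m; case: (boolP (m \in M)) => mM.
    by move: hm; case: (s m) (t m) => [] [].
  by move: hm; rewrite (syn_off sS mM) (syn_off tS mM).
by case: (s == t).
Qed.

Lemma sg_ind (a b : bool) :
  2 * (sgb R a * indb R b) = sgb R a - sgb R (a (+) b).
Proof. by case: a b => [] [] /=; rewrite /sgb /indb /=; ring. Qed.

Lemma BD_free : row_free BD.
Proof.
apply: inj_row_free => v Hv; apply/rowP => j0; rewrite mxE.
set t := (enum_val j0 : {ffun Pauli n -> bool}).
have tS : t \in Syn by exact: enum_valP.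
have H0 : forall i, \sum_j v 0 j * BD j i = 0.
  by move=> i; move/rowP: Hv => /(_ i); rewrite !mxE.
have key : 0 = \sum_j v 0 j * (2 * \sum_(i < #|M|) sgb R (t (enum_val i)) * BD j i).
  transitivity (2 * \sum_(i < #|M|) sgb R (t (enum_val i)) * \sum_j v 0 j * BD j i).
    by rewrite big1 ?mulr0 // => i _; rewrite H0 mulr0.
  rewrite mulr_sumr; under eq_bigr do rewrite mulr_sumr mulr_sumr.
  rewrite exchange_big /=; apply: eq_bigr => j _.
  rewrite mulr_sumr mulr_sumr; apply: eq_bigr => i _; ring.
have X : forall j, 2 * \sum_(i < #|M|) sgb R (t (enum_val i)) * BD j i
    = - (if j == j0 then #|M|%:R else 0).
  move=> j; rewrite mulr_sumr.
  under eq_bigr do rewrite mxE sg_ind.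
  rewrite sumrB (sumI (fun m => sgb R (t m))).
  rewrite (sumI (fun m => sgb R (t m (+) (enum_val j : {ffun _}) m))).
  rewrite sumM_sg // sumM_sg2 //; last exact: enum_valP.
  by rewrite (inj_eq enum_val_inj) eq_sym sub0r.
move: key.
under eq_bigr do rewrite X.
rewrite (bigD1 j0) // big1 => [|j nj]; last by rewrite (negbTE nj) oppr0 mulr0.
rewrite /= eqxx addr0 mulrN => /esym/eqP; rewrite oppr_eq0 mulf_eq0 => /orP [/eqP //|].
have : (0 < #|M|)%N by apply/card_gt0P; exists (pauli_id n); exact: (proj1 HM).
by rewrite pnatr_eq0 lt0n => /negbTE ->.
Qed.


Definition Arow (e : ErrE Gamma) : 'rV[R]_#|M| :=
  \row_i indb R (restr (gam e) (enum_val i) == pau e).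

Lemma rowA r : row r (Amat R Gamma M)^T = Arow (enum_val r).
Proof. by apply/rowP => i; rewrite !mxE. Qed.

Lemma rowD r : row r (Dmat R Gamma M)^T = Fv (pau (enum_val r)).
Proof. by apply/rowP => i; rewrite !mxE comm_sym. Qed.

Lemma sgbD a b : sgb R (a (+) b) = sgb R a * sgb R b.
Proof. by case: a b => [] [] /=; rewrite /sgb /=; ring. Qed.

Lemma restr_id g : restr g (pauli_id n) = pauli_id n.
Proof. by apply/ffunP => i; rewrite !ffunE; case: ifP. Qed.

Lemma fourier (e : ErrE Gamma) m :
  \sum_(q in [set q : Pauli n | supp q \subset gam e])
     sgb R (pauli_comm q m) * sgb R (pauli_comm q (pau e))
  = if restr (gam e) m == pau e
    then #|[set q : Pauli n | supp q \subset gam e]|%:R else 0.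
Proof.
set P := [set q : Pauli n | _].
set x := pauli_mul (restr (gam e) m) (pau e).
have [_ _ sp] := errP e.
have sx : supp x \subset gam e := mul_supp (restr_supp _ _) sp.
transitivity (\sum_(q in P) sgb R (pauli_comm q x)).
  apply: eq_bigr => q; rewrite inE => sq.
  by rewrite comm_mulr comm_restr // sgbD.
rewrite (@sum_sg n R P (fun q => pauli_comm q x)); first last.
- by move=> a b _ _; rewrite comm_mull.
- by move=> a b; rewrite !inE; apply: mul_supp.
- by rewrite inE supp_id sub0set.
rewrite -mul_eq_id -/x.
case: (x =P pauli_id n) => [->|/eqP nx].
  by case: existsP => [[q /andP [_ h]]|//]; rewrite comm_idr in h.
have [q [sq cq]] := witness nx.
case: existsP => // [[]]; exists q; rewrite inE cq andbT.
exact: subset_trans sq sx.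
Qed.

Lemma A_sub : ((Amat R Gamma M)^T <= BD)%MS.
Proof.
apply/row_subP => r; rewrite rowA; set e := enum_val r.
have [gG pe sp] := errP e.
set P := [set q : Pauli n | supp q \subset gam e].
set N : R := #|P|%:R.
have N0 : N != 0.
  have : (0 < #|P|)%N.
    by apply/card_gt0P; exists (pauli_id n); rewrite inE supp_id sub0set.
  by rewrite /N pnatr_eq0 lt0n.
have -> : Arow e = \sum_(q in P)
    (- (2 / N) * sgb R (pauli_comm q (pau e))) *: Fv q.
  apply/rowP => i; rewrite !mxE summxE.
  under eq_bigr do rewrite !mxE.
  set m := enum_val i.
  have h1 := fourier e m.
  have h0 := fourier e (pauli_id n).
  rewrite restr_id eq_sym (negbTE pe) in h0.
  set S := \sum_(q in P) indb R (pauli_comm q m) * sgb R (pauli_comm q (pau e)).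
  have E1 : \sum_(q in P) sgb R (pauli_comm q m) * sgb R (pauli_comm q (pau e))
      = \sum_(q in P) sgb R (pauli_comm q (pau e)) - 2 * S.
    rewrite /S mulr_sumr -sumrB; apply: eq_bigr => q _.
    by rewrite /sgb /indb; case: (pauli_comm q m) (pauli_comm q (pau e)) => [] [] /=; ring.
  have h0' : \sum_(q in P) sgb R (pauli_comm q (pau e)) = 0.
    rewrite -[RHS]h0 -/P; apply: eq_bigr => q _; rewrite comm_idr [sgb R false]/sgb mul1r //.
  have -> : \sum_(q in P) - (2 / N) * sgb R (pauli_comm q (pau e)) * indb R (pauli_comm q m)
      = - (2 / N) * S.
    by rewrite /S mulr_sumr; apply: eq_bigr => q _; ring.
  rewrite E1 h0' -/N in h1.
  move: h1; rewrite /indb -/m; case: (restr (gam e) m == pau e) => h1.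
    have hS : 2 * S = - N by lra.
    by rewrite mulNr (mulrC 2) -mulrA hS mulrN opprK mulVf.
  have -> : S = 0 by lra.
  by rewrite mulr0.
apply: summx_sub => q qP; apply: scalemx_sub; apply: (Fq_sub gG).
by rewrite inE in qP.
Qed.

Lemma B_sub_A : (BD <= (Amat R Gamma M)^T)%MS.
Proof.
apply/row_subP => j; have [e [_ _ ->]] := rowBD j.
have [gG pe sp] := errP e.
set g := gam e in sp gG *.
have -> : Fv (pau e) = \sum_(e' | gam e' == g)
    indb R (pauli_comm (pau e) (pau e')) *: row (enum_rank e') (Amat R Gamma M)^T.
  apply/rowP => i; rewrite !mxE summxE.
  under eq_bigr do rewrite !mxE enum_rankK.
  set m := enum_val i.
  rewrite -(comm_restr m sp).
  case: (boolP (restr g m == pauli_id n)) => [/eqP hid | nid].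
    rewrite hid comm_idr big1 // => e' /eqP ge'.
    have [_ pe' _] := errP e'.
    by rewrite ge' hid eq_sym (negbTE pe') mulr0.
  have P0 : errE_pred Gamma (g, restr g m) by apply/and3P; split => //; exact: restr_supp.
  pose e0 : ErrE Gamma := exist _ (g, restr g m) P0.
  rewrite (bigD1 e0) //= big1 ?addr0.
    by rewrite /gam /pau /= eqxx mulr1.
  move=> e' /andP [/eqP ge' ne].
  rewrite ge'; case: eqP => [h|]; last by rewrite mulr0.
  have E : e' = e0.
    apply: val_inj => /=.
    rewrite h -ge' /gam /pau; exact: surjective_pairing.
  by rewrite E eqxx in ne.
apply: summx_sub => e' _; apply: scalemx_sub; exact: row_sub.
Qed.

Lemma D_sub : ((Dmat R Gamma M)^T <= BD)%MS.
Proof. by apply/row_subP => r; rewrite rowD; apply: F_sub. Qed.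

Lemma B_sub_D : (BD <= (Dmat R Gamma M)^T)%MS.
Proof.
apply/row_subP => j; have [e [_ _ ->]] := rowBD j.
have := rowD (enum_rank e); rewrite enum_rankK => <-; exact: row_sub.
Qed.

Lemma rank_BD : \rank BD = #|Syn|.
Proof. exact: (eqP BD_free). Qed.

Lemma rankA : \rank (Amat R Gamma M) = #|Syn|.
Proof.
rewrite -mxrank_tr -rank_BD; apply/eqP; rewrite eqn_leq.
by rewrite (mxrankS A_sub) (mxrankS B_sub_A).
Qed.

Lemma rankD : \rank (Dmat R Gamma M) = #|Syn|.
Proof.
rewrite -mxrank_tr -rank_BD; apply/eqP; rewrite eqn_leq.
by rewrite (mxrankS D_sub) (mxrankS B_sub_D).
Qed.

Lemma card_classes : #|nontriv_classes Gamma M| = #|Syn|.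
Proof.
pose cls (s : {ffun Pauli n -> bool}) := [set f : ErrE Gamma | syndrome M f == s].
have -> : nontriv_classes Gamma M = [set cls s | s in Syn].
  by rewrite /Syn -imset_comp.
apply: card_in_imset => s1 s2 /imsetP [e1 _ ->] _ h.
have : e1 \in cls (syndrome M e1) by rewrite inE.
by rewrite h inE => /eqP.
Qed.

End Main.

Unset Implicit Arguments.
Set Strict Implicit.

Theorem corollary1 (R : realFieldType) (n : nat) (Gamma : {set {set 'I_n}})
  (M : {set Pauli n}) :
  is_pauli_subgroup M ->
  \rank (Amat R Gamma M) = #|nontriv_classes Gamma M| /\
  \rank (Dmat R Gamma M) = #|nontriv_classes Gamma M|.
Proof.
move=> HM; rewrite card_classes; split; [exact: rankA | exact: rankD].
Qed.
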